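(* Assume $\mathbf{P}$ is hierarchical, $K$ is a field, and $\tau_{(i)}\neq0$, $\eta_{(i)}\neq-1_K$ for all $i\in\Omega$. Let $D,C\in\mathcal{I}(\overline{\mathbf{P}})$. Then $\pi(\Omega,C)=\pi(\Omega,D)$ if and only if there exists a bijection $\varepsilon:C\to D$ with $\eta_{(i)}=\eta_{(\varepsilon(i))}$ for all $i\in C$.
   Context: $\Omega$ is a finite set and $\mathbf{P}=(\Omega,\preccurlyeq_{\mathbf{P}})$ a poset; $\overline{\mathbf{P}}$ is the dual poset and $\mathcal{I}(\overline{\mathbf{P}})$ its set of ideals (up-closed subsets of $\mathbf{P}$). For $Y\subseteq\Omega$: $\max(Y)$ is the set of maximal elements of $Y$ w.r.t. $\preccurlyeq_{\mathbf{P}}$; $\mathcal{I}(Y)$ is the set of down-closed subsets of $Y$. $\tau,\eta\in K^{\Omega}$. For $D,I\subseteq\Omega$, $\varphi(D,I)=(-1)^{|I\cap D|}\big(\prod_{i\in I-\max(I)}\tau_{(i)}\big)\big(\prod_{i\in\max(I)-D}\eta_{(i)}\big)$ if $I\cap D\subseteq\max(I)$, and $0$ otherwise; for $D\subseteq Y\subseteq\Omega$, $\pi(Y,D)=\sum_{I\in\mathcal{I}(Y)}\varphi(D,I)x^{|I|}\in K[x]$. $\mathrm{len}(y)$ is the largest cardinality of a chain in $\mathbf{P}$ with greatest element $y$; $\mathbf{P}$ is hierarchical if $\mathrm{len}(u)+1\leqslant\mathrm{len}(v)$ implies $u\preccurlyeq_{\mathbf{P}}v$. *)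

(* Defs.v *)
From HB Require Import structures.
From mathcomp Require Import all_boot all_order all_algebra.
Set Implicit Arguments. Unset Strict Implicit. Unset Printing Implicit Defensive.
Import GRing.Theory.
Local Open Scope ring_scope.

Definition partial_order (T : finType) (le : rel T) : Prop :=
  [/\ reflexive le, antisymmetric le & transitive le].

Definition maxset_le (T : finType) (le : rel T) (Y : {set T}) : {set T} :=
  [set i in Y | [forall j in Y, le i j ==> (j == i)]].

(* ideals of the dual poset = up-closed subsets of P *)
Definition dual_ideal (T : finType) (le : rel T) (D : {set T}) : bool :=
  [forall i in D, forall j, le i j ==> (j \in D)].

Definition down_closed_in (T : finType) (le : rel T) (Y I : {set T}) : bool :=
  (I \subset Y) && [forall i in I, forall j in Y, le j i ==> (j \in I)].

Definition phi (T : finType) (le : rel T) (K : fieldType) (tau eta : T -> K)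
    (D I : {set T}) : K :=
  if (I :&: D) \subset maxset_le le I then
    (-1) ^+ #|I :&: D|
    * (\prod_(i in I :\: maxset_le le I) tau i)
    * (\prod_(i in maxset_le le I :\: D) eta i)
  else 0.

Definition pi_poly (T : finType) (le : rel T) (K : fieldType) (tau eta : T -> K)
    (Y D : {set T}) : {poly K} :=
  \sum_(I : {set T} | down_closed_in le Y I) phi le tau eta D I *: 'X^#|I|.

Definition chain (T : finType) (le : rel T) (S : {set T}) : bool :=
  [forall x in S, forall y in S, le x y || le y x].

Definition len (T : finType) (le : rel T) (y : T) : nat :=
  \max_(S : {set T} | chain le S && (y \in S) && [forall x in S, le x y]) #|S|.

Definition hierarchical (T : finType) (le : rel T) : Prop :=
  forall u v, (len le u + 1 <= len le v)%N -> le u v.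

(* Main.v *)
Require Import Defs.
From HB Require Import structures.
From mathcomp Require Import all_boot all_order all_algebra.
Set Implicit Arguments. Unset Strict Implicit. Unset Printing Implicit Defensive.
Import GRing.Theory.
Local Open Scope ring_scope.

Lemma prod1D_subsets (T : finType) (R : comRingType) (G : T -> R) (L : {set T}) :
  \prod_(i in L) (1 + G i) = \sum_(S : {set T} | S \subset L) \prod_(i in S) G i.
Proof.
move: {2}#|L| (erefl #|L|) => m; elim: m L => [|m IH] L hL.
  move/eqP: hL; rewrite cards_eq0 => /eqP ->; rewrite big_set0.
  rewrite (big_pred1 set0) ?big_set0 // => S; rewrite subset0.
  by [].
have [a aL] : exists a, a \in L.
  by apply/card_gt0P; rewrite hL.
rewrite (big_setD1 _ aL) IH; last by move: hL; rewrite (cardsD1 a L) aL; case.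
rewrite [RHS](bigID (fun S : {set T} => a \in S)) /= mulrDl mul1r [RHS]addrC; congr (_ + _).
  apply: eq_bigl => S; rewrite subsetD1 andbC; by [].
rewrite big_distrr /=.
rewrite [RHS](reindex_onto (fun S => a |: S) (fun S => S :\ a)) /=; last first.
  by move=> S /andP[_ aS]; rewrite setD1K.
apply: eq_big => S.
  rewrite setU11 andbT subsetD1 subUset sub1set aL /=.
  case aS: (a \in S); rewrite /= ?andbF ?andbT.
    rewrite andbC; case: eqP => [h|] //; by move: aS; rewrite -h !inE eqxx.
  by rewrite setU1K ?aS // eqxx andbT.
rewrite subsetD1 => /andP[_ aS].
by rewrite big_setU1.
Qed.

Section Generic.
Variables (T : finType) (V : eqType).

Definition mtch (A B : {set T}) (g g' : T -> V) (i : T) : T :=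
  nth i (enum [set j in B | g' j == g i]) (index i (enum [set i' in A | g i' == g i])).

Lemma mtch_spec (A B : {set T}) (g g' : T -> V) :
  (forall v, #|[set i in A | g i == v]| = #|[set j in B | g' j == v]|) ->
  forall i, i \in A ->
  [/\ mtch A B g g' i \in B, g' (mtch A B g g' i) = g i & mtch B A g' g (mtch A B g g' i) = i].
Proof.
move=> hc i iA.
set SA := enum [set i' in A | g i' == g i].
set SB := enum [set j in B | g' j == g i].
have iSA : i \in SA by rewrite mem_enum inE iA eqxx.
have kA : (index i SA < size SA)%N by rewrite index_mem.
have kB : (index i SA < size SB)%N by rewrite /SB -cardE -hc cardE.
have jSB : nth i SB (index i SA) \in SB by apply: mem_nth.
move: (jSB); rewrite mem_enum inE => /andP[jB /eqP gj].
have E : mtch A B g g' i = nth i SB (index i SA) by [].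
rewrite E; split => //.
rewrite /mtch gj -/SA -/SB index_uniq ?enum_uniq //.
by rewrite (set_nth_default i) // nth_index.
Qed.

Lemma prod_match (R : comRingType) (A B : {set T}) (g g' : T -> V) (F : V -> R) :
  (forall v, #|[set i in A | g i == v]| = #|[set j in B | g' j == v]|) ->
  \prod_(i in A) F (g i) = \prod_(j in B) F (g' j).
Proof.
move=> hc.
have hc' : forall v, #|[set j in B | g' j == v]| = #|[set i in A | g i == v]| by move=> v; rewrite hc.
rewrite [RHS](reindex_onto (mtch A B g g') (mtch B A g' g)); last first.
  by move=> j jB; have [_ _ ->] := mtch_spec hc' jB.
apply: eq_big => i.
  apply/idP/andP => [iA|[jB /eqP e]].
    by have [h1 _ ->] := mtch_spec hc iA; rewrite h1 eqxx.
  by have [h _ _] := mtch_spec hc' jB; rewrite -e.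
by move=> iA; have [_ -> _] := mtch_spec hc iA.
Qed.

End Generic.

Section PolyCount.
Variables (T : finType) (K : fieldType).

Lemma mup_lin (x c : K) : mup x (1 + c *: 'X) = (1 + c * x == 0) :> nat.
Proof.
have [->|c0] := eqVneq c 0.
  rewrite scale0r addr0 mul0r addr0 oner_eq0 /=.
  by apply: mupNroot; rewrite /root hornerC oner_eq0.
have -> : 1 + c *: 'X = c%:P * ('X - (- c^-1)%:P).
  by rewrite polyCN opprK mulrDr mul_polyC -polyCM mulfV // addrC polyC1.
rewrite mupM ?polyC_eq0 ?polyXsubC_eq0 //.
rewrite mupNroot ?add0n; last by rewrite /root hornerC.
have := mup_XsubCX 1 x (- c^-1); rewrite expr1 => ->.
have e : (- c^-1 == x) = (1 + c * x == 0).
  apply/eqP/eqP => [<-|h]; first by rewrite mulrN mulfV // subrr.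
  apply: (mulfI c0); rewrite mulrN mulfV //; apply/eqP.
  by rewrite eq_sym -subr_eq0 opprK addrC h.
by rewrite e; case: (_ == 0).
Qed.

End PolyCount.

Section PolyCount2.
Variables (T : finType) (K : fieldType).

Lemma lin_nz (c : K) : 1 + c *: 'X != 0 :> {poly K}.
Proof.
apply/eqP => h; have := congr1 (fun p : {poly K} => p`_0) h.
rewrite coefD coefZ coefX coef1 /= mulr0 addr0 coef0 => /eqP; rewrite oner_eq0.
by [].
Qed.

Lemma mup_prod_lin (x : K) (L : {set T}) (c : T -> K) :
  mup x (\prod_(i in L) (1 + c i *: 'X)) = (\sum_(i in L) ((1 + c i * x == 0)%R : nat))%N.
Proof.
suff [] : \prod_(i in L) (1 + c i *: 'X) != 0 /\
  mup x (\prod_(i in L) (1 + c i *: 'X)) = (\sum_(i in L) ((1 + c i * x == 0)%R : nat))%N by [].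
apply: (@big_rec2 nat {poly K} (fun m p => p != 0 /\ mup x p = m)).
  by rewrite oner_neq0; split => //; apply: mupNroot; rewrite root1.
move=> i m p _ [pnz mp]; split; first by rewrite mulf_neq0 // lin_nz.
by rewrite mupM ?lin_nz // mup_lin mp.
Qed.

Lemma cnt_sum (L : {set T}) (b : T -> bool) : #|[set i in L | b i]| = (\sum_(i in L) (b i : nat))%N.
Proof. by rewrite -sum1dep_card big_mkcondr /=; apply: eq_bigr => i _; case: (b i). Qed.

Lemma size_lin (c : K) : size (1 + c *: 'X) = (c != 0 : nat).+1.
Proof.
rewrite addrC -mul_polyC -polyC1 size_MXaddC polyC_eq0 oner_eq0 andbF size_polyC.
by [].
Qed.

Lemma size_prod_lin (L : {set T}) (c : T -> K) :
  size (\prod_(i in L) (1 + c i *: 'X)) = (#|[set i in L | c i != 0]|).+1.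
Proof.
rewrite size_prod; last by move=> i _; apply: lin_nz.
rewrite (eq_bigr (fun i => 1 + (c i != 0%R : nat))%N); last by move=> i _; rewrite size_lin add1n.
rewrite big_split /= sum1_card cnt_sum; change #|in_mem^~ (mem L)| with #|L|.
by rewrite -addnS addKn.
Qed.

Lemma cnt_compl (L : {set T}) (b : T -> bool) :
  (#|[set i in L | b i]| + #|[set i in L | ~~ b i]|)%N = #|L|.
Proof.
rewrite !cnt_sum -big_split /= -sum1_card; apply: eq_bigr => i _; by case: (b i).
Qed.

Lemma lin_prod_counts (L : {set T}) (c c' : T -> K) :
  \prod_(i in L) (1 + c i *: 'X) = \prod_(i in L) (1 + c' i *: 'X) ->
  forall v, #|[set i in L | c i == v]| = #|[set i in L | c' i == v]|.
Proof.
move=> h v.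
have [->|v0] := eqVneq v 0.
  have hs : size (\prod_(i in L) (1 + c i *: 'X)) = size (\prod_(i in L) (1 + c' i *: 'X)) by rewrite h.
  rewrite !size_prod_lin in hs.
  case: hs => hs.
  have := cnt_compl L (fun i => c i == 0); have := cnt_compl L (fun i => c' i == 0).
  by rewrite hs => <- /eqP; rewrite eqn_add2r => /eqP.
have hm : mup (- v^-1) (\prod_(i in L) (1 + c i *: 'X)) = mup (- v^-1) (\prod_(i in L) (1 + c' i *: 'X)) by rewrite h.
rewrite !mup_prod_lin in hm.
rewrite !cnt_sum; move: hm.
have e (a : K) : (1 + a * - v^-1 == 0) = (a == v).
  rewrite mulrN -(inj_eq (mulIf v0)) mulrBl -mulrA mulVf // mulr1 mul1r mul0r subr_eq0.
  by rewrite eq_sym.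
by rewrite (eq_bigr _ (fun i _ => congr1 nat_of_bool (e (c i))))
           (eq_bigr _ (fun i _ => congr1 nat_of_bool (e (c' i)))).
Qed.

End PolyCount2.

Lemma window_split (R : ringType) n (p q : nat -> {poly R}) (lo hi : nat -> nat) :
  (forall k k', (k < k')%N -> (hi k <= lo k')%N) ->
  (forall k j, (p k)`_j != 0 -> (lo k < j <= hi k)%N) ->
  (forall k j, (q k)`_j != 0 -> (lo k < j <= hi k)%N) ->
  \sum_(k < n) p k = \sum_(k < n) q k -> forall k, (k < n)%N -> p k = q k.
Proof.
move=> mono hp hq hs k0 k0n; apply/polyP => j.
have zero (r : nat -> {poly R}) (hr : forall k j, (r k)`_j != 0 -> (lo k < j <= hi k)%N) k :
    ~~ (lo k < j <= hi k)%N -> (r k)`_j = 0.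
  by move=> hn; apply/eqP; apply: contraNT hn; apply: hr.
have [inw|outw] := boolP (lo k0 < j <= hi k0)%N; last by rewrite !zero.
have other (r : nat -> {poly R}) (hr : forall k j, (r k)`_j != 0 -> (lo k < j <= hi k)%N) :
    (\sum_(k < n) r k)`_j = (r k0)`_j.
  rewrite coef_sum (bigD1 (Ordinal k0n)) //= big1 ?addr0 // => k nk.
  apply: zero => //; apply/negP => /andP[l1 l2]; case/andP: inw => l3 l4.
  have : (k : nat) != k0 by move: nk; apply: contra => /eqP e; apply/eqP/val_inj.
  case: ltngtP => // [lt|gt] _.
    by move: (leq_ltn_trans l2 (leq_ltn_trans (mono _ _ lt) l3)); rewrite ltnn.
  by move: (leq_ltn_trans l4 (leq_ltn_trans (mono _ _ gt) l1)); rewrite ltnn.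
by rewrite -(other p hp) -(other q hq) hs.
Qed.
Section S.
Variables (T : finType) (le : rel T).
Hypothesis hP : partial_order le.
Hypothesis hH : hierarchical le.

Lemma len_attained x : exists2 S : {set T},
  [&& chain le S, x \in S & [forall y in S, le y x]] & len le x = #|S|.
Proof.
have [|S PS E] := @eq_bigmax_cond _
  [pred S : {set T} | [&& chain le S, x \in S & [forall y in S, le y x]]] (fun S => #|S|).
  apply/card_gt0P; exists [set x]; rewrite inE.
  case: hP => rf _ _.
  apply/and3P; split; last (by apply/forall_inP => y; rewrite inE => /eqP ->);
    last by rewrite inE.
  by apply/forall_inP => y; rewrite inE => /eqP ->; apply/forall_inP => z; rewrite inE => /eqP ->; rewrite rf.
exists S => //; rewrite /len -E; apply: eq_bigl => T0; rewrite inE andbA. all: try (by rewrite inE in PS).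
Qed.

Lemma len_ge x S : [&& chain le S, x \in S & [forall y in S, le y x]] -> (#|S| <= len le x)%N.
Proof.
move=> h; rewrite /len.
apply: (@leq_bigmax_cond _ (fun S : {set T} => chain le S && (x \in S) && [forall y in S, le y x]) (fun S => #|S|) S).
by rewrite -andbA.
Qed.

Lemma len_le_card x : (len le x <= #|T|)%N.
Proof. by apply/bigmax_leqP => S _; apply: max_card. Qed.

Lemma len_lt x y : x != y -> le x y -> (len le x < len le y)%N.
Proof.
move=> nxy lxy; case: hP => rf an tr.
have [S /and3P[cS xS mS] ->] := len_attained x.
have yS : y \notin S.
  apply/negP => yS; move/forall_inP: mS => /(_ y yS) lyx.
  by move: nxy; rewrite (an x y) ?eqxx // lxy lyx.
have -> : #|S|.+1 = #|y |: S| by rewrite cardsU1 yS.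
apply: len_ge; apply/and3P; split; last first.
- apply/forall_inP => z; rewrite !inE => /orP [/eqP -> | zS]; first exact: rf.
  by apply: tr lxy; move/forall_inP: mS; apply.
- by rewrite setU11.
apply/forall_inP => z; rewrite !inE => /orP [/eqP -> | zS];
  apply/forall_inP => w; rewrite !inE => /orP [/eqP -> | wS].
- by rewrite rf.
- by rewrite orbC (tr x) //; move/forall_inP: mS; apply.
- by rewrite (tr x) //; move/forall_inP: mS; apply.
- by move/forall_inP: cS => /(_ z zS) /forall_inP; apply.
Qed.

Lemma leE x y : le x y = (x == y) || (len le x < len le y)%N.
Proof.
case: hP => rf _ _.
have [-> | nxy] := eqVneq x y; first by rewrite rf.
apply/idP/idP => [|h]; first exact: len_lt.
by apply: hH; rewrite addn1.
Qed.


Local Notation lv := (len le).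

Lemma lv_lt_le x y : (lv x < lv y)%N -> le x y.
Proof. by move=> h; rewrite leE // h orbT. Qed.

Definition Lt k := [set i | (lv i < k)%N].
Definition Lk k := [set i | lv i == k].

Lemma dcE I : down_closed_in le setT I =
  [forall i in I, forall j, (lv j < lv i)%N ==> (j \in I)].
Proof.
rewrite /down_closed_in subsetT /=.
apply/forall_inP/forall_inP => h i iI.
  apply/forall_inP => j lji.
  move/forall_inP: (h i iI) => /(_ j (in_setT j)) /implyP; apply.
  by rewrite leE // lji orbT.
apply/forall_inP => j _; apply/implyP; rewrite leE // => /orP [/eqP -> //|lji].
by move/forall_inP: (h i iI); apply.
Qed.

Definition mx (I : {set T}) := \max_(i in I) lv i.

Lemma mx_ge (I : {set T}) i : i \in I -> (lv i <= mx I)%N.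
Proof. by move=> iI; rewrite /mx; apply: (@leq_bigmax_cond _ (mem I) lv i). Qed.

Lemma mx_attained (I : {set T}) : I != set0 -> exists2 i, i \in I & mx I = lv i.
Proof.
rewrite -card_gt0 => h; have [i iI E] := @eq_bigmax_cond _ (mem I) lv h.
by exists i.
Qed.

Lemma mx_lt (I : {set T}) : (mx I < #|T|.+1)%N.
Proof. by rewrite ltnS; apply/bigmax_leqP => i _; apply: len_le_card. Qed.

Lemma LtS_mx k (S : {set T}) : S \subset Lk k -> S != set0 -> mx (Lt k :|: S) = k.
Proof.
move=> sS nS; apply/eqP; rewrite eqn_leq; apply/andP; split.
  apply/bigmax_leqP => i; rewrite !inE => /orP [/ltnW //|].
  by move/(subsetP sS); rewrite inE => /eqP ->.
have [s sS'] : exists s, s \in S by apply/card_gt0P; rewrite card_gt0.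
have := mx_ge (_ : s \in Lt k :|: S); rewrite inE sS' orbT => /(_ isT).
by move: (subsetP sS s sS'); rewrite inE => /eqP ->.
Qed.

Lemma LtS_dc k (S : {set T}) : S \subset Lk k -> down_closed_in le setT (Lt k :|: S).
Proof.
move=> sS; rewrite dcE; apply/forall_inP => i iI; apply/forallP => j; apply/implyP => lji.
rewrite !inE; apply/orP; left.
move: iI; rewrite !inE => /orP [h|]; first exact: ltn_trans lji h.
by move/(subsetP sS); rewrite inE => /eqP <-.
Qed.

Lemma LtS_max k (S : {set T}) : S \subset Lk k -> S != set0 -> maxset_le le (Lt k :|: S) = S.
Proof.
move=> sS nS; have [s sS'] : exists s, s \in S by apply/card_gt0P; rewrite card_gt0.
have lvs : lv s = k by move: (subsetP sS s sS'); rewrite inE => /eqP.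
apply/setP => i; rewrite /maxset_le inE.
case iS: (i \in S).
  rewrite inE iS orbT /=. apply/forall_inP => j jI; rewrite leE //.
  have lvi : lv i = k by move: (subsetP sS i iS); rewrite inE => /eqP.
  have := mx_ge jI; rewrite LtS_mx // -lvi => lj.
  by rewrite (leq_gtF lj) orbF eq_sym; apply/implyP.
apply: negbTE; rewrite negb_and; apply/orP.
case iL: (i \in Lt k :|: S); last by left.
right; apply/forall_inP => /(_ s); rewrite inE sS' orbT => /(_ isT).
move: iL; rewrite !inE iS orbF => lik.
rewrite leE // lvs lik orbT /= => /eqP esi.
by move: lik; rewrite -lvs esi ltnn.
Qed.

Lemma Lt_Lk_disj k : Lt k :&: Lk k = set0.
Proof. by apply/setP => i; rewrite !inE; case: ltngtP. Qed.


Lemma Lt_S_disj k (S : {set T}) : S \subset Lk k -> Lt k :&: S = set0.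
Proof.
move=> sS; apply/setP => i; rewrite !inE; apply/negbTE; apply/negP => /andP[h iS].
by move: (subsetP sS i iS); rewrite inE => /eqP hk; move: h; rewrite hk ltnn.
Qed.

Variables (K : fieldType) (tau eta : T -> K).

Definition cf (D : {set T}) i : K := if i \in D then -1 else eta i.

Lemma prod_cf D (S : {set T}) :
  \prod_(i in S) cf D i = (-1) ^+ #|S :&: D| * \prod_(i in S :\: D) eta i.
Proof.
rewrite (big_setID D); congr (_ * _).
  by rewrite -prodr_const; apply: eq_bigr => i; rewrite inE /cf => /andP[_ ->].
by apply: eq_bigr => i; rewrite inE /cf => /andP[/negbTE -> _].
Qed.

Lemma phi_LtS D k (S : {set T}) : S \subset Lk k -> S != set0 ->
  phi le tau eta D (Lt k :|: S) =
  if Lt k :&: D == set0 then (\prod_(i in Lt k) tau i) * \prod_(i in S) cf D i else 0.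
Proof.
move=> sS nS; have dj := Lt_S_disj sS.
rewrite /phi LtS_max //.
have E1 : (Lt k :|: S) :\: S = Lt k.
  apply/setP => i; rewrite !inE; case iS: (i \in S); rewrite ?orbF ?andbT //=.
  apply/esym/negbTE/negP => h.
  have : i \in Lt k :&: S by rewrite !inE h iS.
  by rewrite dj inE.
have E2 : ((Lt k :|: S) :&: D \subset S) = (Lt k :&: D == set0).
  rewrite setIUl subUset subsetIl andbT.
  apply/idP/eqP => [h|->]; last exact: sub0set.
  apply/setP => i; rewrite in_set0; apply/negbTE/negP => hi.
  have : i \in Lt k :&: S by rewrite inE; move: (hi); rewrite inE => /andP[-> _]; rewrite (subsetP h).
  by rewrite dj inE.
rewrite E1 E2; case: eqP => // h0.
have E3 : (Lt k :|: S) :&: D = S :&: D by rewrite setIUl h0 set0U.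
by rewrite E3 prod_cf mulrA [_ * \prod_(i in Lt k) _]mulrC.
Qed.


Definition Q D k : {poly K} := \prod_(i in Lk k) (1 + cf D i *: 'X).
Definition term D k : {poly K} :=
  if Lt k :&: D == set0 then (\prod_(i in Lt k) tau i) *: ('X^#|Lt k| * (Q D k - 1)) else 0.

Lemma Q_expand D k : Q D k - 1 =
  \sum_(S : {set T} | (S \subset Lk k) && (S != set0)) (\prod_(i in S) cf D i) *: 'X^#|S|.
Proof.
rewrite /Q prod1D_subsets (bigD1 set0) ?sub0set //= big_set0 addrAC subrr add0r.
by apply: eq_bigr => S _; rewrite scaler_prodr.
Qed.

Lemma dc_decomp (I : {set T}) k : down_closed_in le setT I -> I != set0 -> mx I = k ->
  Lt k :|: (I :&: Lk k) = I.
Proof.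
move=> dc nI mk; have [i0 i0I E] := mx_attained nI.
apply/setP => i; rewrite !inE.
apply/idP/idP => [/orP [lik|/andP[//]] | iI].
  move: dc; rewrite dcE => /forall_inP /(_ i0 i0I) /forall_inP; apply.
  by rewrite -E mk.
have := mx_ge iI; rewrite mk leq_eqVlt => /orP [->|->]; by rewrite ?iI ?orbT.
Qed.

Lemma pi_formula D : pi_poly le tau eta setT D = 1 + \sum_(k < #|T|.+1) term D k.
Proof.
rewrite /pi_poly (bigD1 set0) /=; last by rewrite dcE; apply/forall_inP => i; rewrite inE.
congr (_ + _).
  rewrite /phi set0I sub0set cards0 expr0 mul1r.
  rewrite !big_pred0 ?mulr1 ?scale1r ?expr0 // => i; rewrite !inE ?andbF //.
rewrite (partition_big (fun I => inord (mx I) : 'I_#|T|.+1) xpredT) //=.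
apply: eq_bigr => k _.
have mxk (I : {set T}) : (inord (mx I) == k :> 'I_#|T|.+1) = (mx I == k).
  apply/eqP/eqP => [<-|e]; first by rewrite inordK // mx_lt.
  apply: val_inj => /=; rewrite inordK; [exact: e | exact: mx_lt].
rewrite (reindex_onto (fun S => Lt k :|: S) (fun I => I :&: Lk k)) /=; last first.
  move=> I /andP[/andP[dc nI]]; rewrite mxk => /eqP mk.
  exact: dc_decomp.
rewrite (eq_bigl (fun S : {set T} => (S \subset Lk k) && (S != set0))); last first.
  move=> S; rewrite setIUl Lt_Lk_disj set0U.
  have -> : (S :&: Lk k == S) = (S \subset Lk k).
    by apply/eqP/idP => [<-|/setIidPl //]; exact: subsetIr.
  case sS: (S \subset Lk k); rewrite ?andbF ?andbT //.
  have [->|nS] := eqVneq S set0.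
    rewrite setU0 mxk /=; apply/negbTE; rewrite negb_and; apply/orP.
    have [->|nL] := eqVneq (Lt k) set0; first by left; rewrite andbF.
    right; have [i iL ->] := mx_attained nL.
    by move: iL; rewrite inE; case: ltngtP.
  rewrite LtS_dc // mxk LtS_mx // eqxx /= ?andbT.
  apply/eqP => h; move/eqP: nS; apply; apply/setP => i; rewrite in_set0; apply/negbTE/negP => iS.
  have : i \in Lt k :|: S by rewrite inE iS orbT.
  by rewrite h inE.
rewrite /term; case: eqP => [h0|h0]; last first.
  apply: big1 => S /andP[sS nS]; rewrite phi_LtS //.
  by case: eqP => [e|_]; [case: (h0 e) | rewrite scale0r].
rewrite Q_expand mulr_sumr scaler_sumr.
apply: eq_bigr => S /andP[sS nS].
rewrite phi_LtS // h0 eqxx cardsU Lt_S_disj // cards0 subn0 exprD.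
by rewrite -scalerAr -scalerA scalerAr.
Qed.


Lemma lv_lt_n i : (lv i < #|T|.+1)%N.
Proof. by rewrite ltnS len_le_card. Qed.

Lemma Lt_succ_card k : #|Lt k.+1| = (#|Lt k| + #|Lk k|)%N.
Proof.
have -> : Lt k.+1 = Lt k :|: Lk k by apply/setP => i; rewrite !inE ltnS leq_eqVlt orbC.
by rewrite cardsU Lt_Lk_disj cards0 subn0.
Qed.

Lemma term_support D k j : (term D k)`_j != 0 -> (#|Lt k| < j <= #|Lt k.+1|)%N.
Proof.
rewrite /term; case: ifP => _; last by rewrite coef0 eqxx.
rewrite coefZ coefXnM Q_expand coef_sum; case: ltnP => [_|hj]; first by rewrite mulr0 eqxx.
move=> /eqP h; apply/andP; split.
  rewrite ltn_neqAle hj andbT; apply/eqP => e; apply: h.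
  rewrite -e subnn [X in _ * X]big1 ?mulr0 // => S /andP[_ nS].
  by rewrite coefZ coefXn eq_sym cards_eq0 (negbTE nS) mulr0.
rewrite leqNgt; apply/negP => hgt; apply: h.
rewrite [X in _ * X]big1 ?mulr0 // => S /andP[sS _]; rewrite coefZ coefXn.
suff -> : (j - #|Lt k| == #|S|)%N = false by rewrite mulr0.
apply/negbTE; rewrite neq_ltn; apply/orP; right.
rewrite Lt_succ_card in hgt.
rewrite ltn_subRL; apply: leq_ltn_trans hgt.
by rewrite leq_add2l subset_leq_card.
Qed.

Lemma terms_eq C D : pi_poly le tau eta setT C = pi_poly le tau eta setT D ->
  forall k, (k < #|T|.+1)%N -> term C k = term D k.
Proof.
rewrite !pi_formula => /addrI h.
apply: (window_split (lo := fun k => #|Lt k|) (hi := fun k => #|Lt k.+1|)) h.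
- move=> k k' lt; apply: subset_leq_card; apply/subsetP => i; rewrite !inE ltnS => h.
  exact: leq_ltn_trans h lt.
- exact: term_support.
- exact: term_support.
Qed.


Hypothesis htau : forall i, tau i != 0.
Hypothesis heta : forall i, eta i != -1.

Definition free D k := Lt k :&: D == set0.
Definition cnt (A : {set T}) v := #|[set i in A | eta i == v]|.

Lemma up_lv D : dual_ideal le D -> forall i j, i \in D -> (lv i < lv j)%N -> j \in D.
Proof.
move=> hD i j iD lij.
by move/forall_inP: hD => /(_ i iD) /forallP /(_ j) /implyP; apply; apply: lv_lt_le.
Qed.

Lemma tauprod_nz k : \prod_(i in Lt k) tau i != 0.
Proof. by apply/prodf_neq0 => i _; apply: htau. Qed.

Lemma Xn_nz m : 'X^m != 0 :> {poly K}.
Proof. by rewrite expf_neq0 // polyX_eq0. Qed.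

Lemma term_QQ C D k : term C k = term D k -> free C k -> free D k -> Q C k = Q D k.
Proof.
move=> h fC fD; move: h; rewrite /term -/(free C k) -/(free D k) fC fD.
move=> /(scalerI (tauprod_nz k)) /(mulfI (Xn_nz _)).
exact: addIr.
Qed.

Lemma Q_at1 D k : (Q D k).[1] = \prod_(i in Lk k) (1 + cf D i).
Proof.
rewrite /Q horner_prod; apply: eq_bigr => i _.
by rewrite hornerD hornerC hornerZ hornerX mulr1.
Qed.

Lemma one_eta_nz i : 1 + eta i != 0.
Proof. by rewrite addrC addr_eq0 heta. Qed.

Lemma free_imp C D : (forall k, (k < #|T|.+1)%N -> term C k = term D k) ->
  forall k, free C k -> free D k.
Proof.
move=> ht k fC; apply/negPn/negP => nfD.
have ex : exists m, [exists d in D, lv d == m].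
  have [d] : exists d, d \in Lt k :&: D.
    by apply/card_gt0P; rewrite card_gt0.
  by rewrite inE => /andP[_ dD]; exists (lv d); apply/existsP; exists d; rewrite dD eqxx.
case: (ex_minnP ex) => k' /exists_inP[d dD /eqP lvd] kmin.
have dlt : (lv d < k)%N.
  move: nfD; rewrite /free => /set0Pn[d0]; rewrite !inE => /andP[l0 d0D].
  apply: leq_ltn_trans l0; rewrite lvd; apply: kmin.
  by apply/exists_inP; exists d0.
have fD' : free D k'.
  rewrite /free; apply/eqP/setP => i; rewrite !inE; apply/negbTE/negP => /andP[lik iD].
  have : (k' <= lv i)%N by apply: kmin; apply/exists_inP; exists i.
  by rewrite leqNgt lik.
have fC' : free C k'.
  rewrite /free; apply/eqP/setP => i; rewrite !inE; apply/negbTE/negP => /andP[lik iC].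
  have : i \in Lt k :&: C by rewrite !inE iC andbT (ltn_trans lik) // -lvd.
  by rewrite (eqP fC) inE.
have := term_QQ (ht k' _) fC' fD'; rewrite -lvd lv_lt_n => /(_ isT) hQ.
have := congr1 (fun p => p.[1]) hQ; rewrite /= !Q_at1.
have -> : \prod_(i in Lk (lv d)) (1 + cf D i) = 0.
  by apply/eqP/prodf_eq0; exists d; rewrite ?inE ?eqxx // /cf dD subrr.
apply/eqP/prodf_neq0 => i; rewrite inE => /eqP li.
rewrite /cf; case: ifP => iC; last exact: one_eta_nz.
have : i \in Lt k :&: C by rewrite !inE iC andbT li.
by rewrite (eqP fC) inE.
Qed.

Lemma notfree_Lk D k : dual_ideal le D -> ~~ free D k -> Lk k \subset D.
Proof.
move=> hD /set0Pn[d]; rewrite !inE => /andP[ld dD].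
apply/subsetP => i; rewrite inE => /eqP li.
by apply: (up_lv hD dD); rewrite li.
Qed.

Lemma cnt_split A B v : (cnt (A :&: B) v + cnt (A :\: B) v)%N = cnt A v.
Proof.
rewrite /cnt -(cardsID B [set i in A | eta i == v]); congr (_ + _)%N; apply: eq_card => i;
  by rewrite !inE; case: (i \in A); case: (i \in B); case: (eta i == v).
Qed.

Lemma cnt_m1 A : cnt A (-1) = 0%N.
Proof.
apply/eqP; rewrite cards_eq0; apply/eqP/setP => i; rewrite !inE.
by rewrite (negbTE (heta i)) andbF.
Qed.

Lemma cf_count D k v : v != -1 ->
  #|[set i in Lk k | cf D i == v]| = cnt (Lk k :\: D) v.
Proof.
move=> hv; rewrite /cnt; apply: eq_card => i; rewrite !inE /cf.
case: (i \in D); rewrite ?andbF ?andbT //=.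
have -> : (-1 == v) = false by apply/negbTE; apply: contra hv => /eqP ->.
by rewrite andbF.
Qed.

Lemma cf_count_m1 D k : #|[set i in Lk k | cf D i == -1]| = #|Lk k :&: D|.
Proof.
apply: eq_card => i; rewrite !inE /cf.
by case: (i \in D); rewrite ?eqxx ?andbT ?andbF // (negbTE (heta i)) andbF.
Qed.


Lemma level_counts C D : dual_ideal le C -> dual_ideal le D ->
  (forall k, (k < #|T|.+1)%N -> term C k = term D k) ->
  forall k v, (k < #|T|.+1)%N -> cnt (C :&: Lk k) v = cnt (D :&: Lk k) v.
Proof.
move=> hC hD ht k v kn.
have ht' : forall k, (k < #|T|.+1)%N -> term D k = term C k by move=> k' k'n; rewrite ht.
case fC: (free C k).
  have fD := free_imp ht fC.
  have hQ := term_QQ (ht k kn) fC fD.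
  have hc := lin_prod_counts hQ v.
  have [->|hv] := eqVneq v (-1); first by rewrite !cnt_m1.
  rewrite !cf_count // in hc.
  rewrite setIC [D :&: _]setIC.
  have e1 := cnt_split (Lk k) C v; have e2 := cnt_split (Lk k) D v.
  move: e1 e2; rewrite hc => e1 e2.
  by apply/eqP; rewrite -(eqn_add2r (cnt (Lk k :\: D) v)) e1 e2.
have nfD : ~~ free D k by apply/negP => fD; move: fC; rewrite (free_imp ht' fD).
by rewrite (setIidPr (notfree_Lk hC (negbT fC))) (setIidPr (notfree_Lk hD nfD)).
Qed.

Lemma inordE i (k : 'I_#|T|.+1) : (inord (lv i) == k) = (lv i == k).
Proof.
apply/eqP/eqP => [<-|e]; first by rewrite inordK // lv_lt_n.
by apply: val_inj => /=; rewrite inordK; [exact: e | exact: lv_lt_n].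
Qed.

Lemma cnt_levels A v : cnt A v = (\sum_(k < #|T|.+1) cnt (A :&: Lk k) v)%N.
Proof.
rewrite /cnt -sum1_card (partition_big (fun i => inord (lv i) : 'I_#|T|.+1) xpredT) //=.
apply: eq_bigr => k _; rewrite sum1dep_card; apply: eq_card => i.
by rewrite !inE inordE andbAC.
Qed.

Lemma bij_of_counts C D : (forall v, cnt C v = cnt D v) ->
  exists e : {x : T | x \in C} -> {x : T | x \in D},
    bijective e /\ forall i, eta (sval i) = eta (sval (e i)).
Proof.
move=> hc.
have hc' : forall v, #|[set i in C | eta i == v]| = #|[set j in D | eta j == v]| := hc.
have hd : forall v, #|[set i in D | eta i == v]| = #|[set j in C | eta j == v]|.
  by move=> v; rewrite hc'.
have s1 (x : {x : T | x \in C}) : mtch C D eta eta (sval x) \in D.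
  by case: (mtch_spec hc' (svalP x)).
have s2 (y : {y : T | y \in D}) : mtch D C eta eta (sval y) \in C.
  by case: (mtch_spec hd (svalP y)).
exists (fun x => exist (fun x => x \in D) _ (s1 x)); split.
  exists (fun y => exist (fun x => x \in C) _ (s2 y)).
    by move=> x; apply: val_inj => /=; case: (mtch_spec hc' (svalP x)).
  by move=> y; apply: val_inj => /=; case: (mtch_spec hd (svalP y)).
by move=> x /=; case: (mtch_spec hc' (svalP x)) => _ -> _.
Qed.


Lemma counts_of_bij (C D : {set T}) (e : {x : T | x \in C} -> {x : T | x \in D}) :
  bijective e -> (forall i, eta (sval i) = eta (sval (e i))) ->
  forall (P : pred K), #|[set i in C | P (eta i)]| = #|[set i in D | P (eta i)]|.
Proof.
move=> be he P.
have cs (A : {set T}) : #|[set i in A | P (eta i)]| =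
    #|[set x : {x : T | x \in A} | P (eta (sval x))]|.
  rewrite -(card_imset [set x : {x : T | x \in A} | P (eta (sval x))] val_inj); apply: eq_card => i; rewrite inE.
  apply/andP/imsetP => [[iA Pi]|[x]].
    by exists (exist (fun x => x \in A) i iA); rewrite ?inE.
  by rewrite inE => Px ->; split; [exact: (valP x) | exact: Px].
rewrite !cs -(card_imset [set x : {x : T | x \in C} | P (eta (sval x))] (bij_inj be)); apply: eq_card => y.
case: be => f ef fe.
apply/imsetP/idP => [[x]|]; first by rewrite !inE => Px ->; rewrite -he.
rewrite inE => Py; exists (f y); rewrite ?fe // inE he fe //.
Qed.

Definition Gt k := [set i | (k < lv i)%N].

Lemma free_card (C D : {set T}) k : dual_ideal le D -> #|C| = #|D| -> free C k -> free D k.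
Proof.
move=> hD hc fC; apply/negPn/negP => /set0Pn[d]; rewrite !inE => /andP[ld dD].
have : C \proper D.
  apply/properP; split; last first.
    exists d => //; apply/negP => dC.
    have : d \in Lt k :&: C by rewrite !inE ld dC.
    by rewrite (eqP fC) inE.
  apply/subsetP => i iC; apply: (up_lv hD dD); apply: (leq_trans ld).
  rewrite leqNgt; apply/negP => lik.
  have : i \in Lt k :&: C by rewrite !inE lik iC.
  by rewrite (eqP fC) inE.
by move/proper_card; rewrite hc ltnn.
Qed.

Lemma free_CLk (C : {set T}) k : free C k -> C :&: Lk k = C :\: Gt k.
Proof.
move=> fC; apply/setP => i; rewrite !inE.
case iC: (i \in C); rewrite ?andbF ?andbT //=.
have : (k <= lv i)%N.
  rewrite leqNgt; apply/negP => lik.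
  have : i \in Lt k :&: C by rewrite !inE lik iC.
  by rewrite (eqP fC) inE.
rewrite leq_eqVlt => /orP [/eqP <-|lt]; first by rewrite eqxx ltnn.
by rewrite lt (gtn_eqF lt).
Qed.

Lemma Gt_sub (C : {set T}) k : dual_ideal le C -> C :&: Lk k != set0 -> Gt k \subset C.
Proof.
move=> hC /set0Pn[c]; rewrite !inE => /andP[cC /eqP lc].
by apply/subsetP => i; rewrite inE => lki; apply: (up_lv hC cC); rewrite lc.
Qed.

Lemma mixed_lt (C D : {set T}) k : dual_ideal le D -> free C k -> free D k ->
  C :&: Lk k = set0 -> D :&: Lk k != set0 -> (#|C| < #|D|)%N.
Proof.
move=> hD fC fD c0 d0.
have sCG : C \subset Gt k.
  apply/subsetP => i iC.
  have : i \in C :\: Gt k -> false by rewrite -free_CLk // c0 inE.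
  by rewrite inE iC andbT; case: (i \in Gt k) => // /(_ isT).
apply: (leq_ltn_trans (subset_leq_card sCG)); apply: proper_card.
apply/properP; split; first exact: Gt_sub.
case/set0Pn: (d0) => d; rewrite free_CLk // inE => /andP[dG dD].
by exists d.
Qed.

Lemma level_if (C D : {set T}) k : dual_ideal le C -> dual_ideal le D -> #|C| = #|D| ->
  (forall v, cnt C v = cnt D v) -> free C k -> free D k -> Q C k = Q D k.
Proof.
move=> hC hD hcard hcnt fC fD.
suff [h1 h2] : #|Lk k :&: C| = #|Lk k :&: D| /\
    forall v, cnt (Lk k :&: C) v = cnt (Lk k :&: D) v.
  apply: (@prod_match _ _ _ (Lk k) (Lk k) (cf C) (cf D) (fun c => 1 + c *: 'X)) => v.
  have [->|hv] := eqVneq v (-1); first by rewrite !cf_count_m1.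
  rewrite !cf_count //.
  have e1 := cnt_split (Lk k) C v; have e2 := cnt_split (Lk k) D v.
  by apply/eqP; rewrite -(eqn_add2l (cnt (Lk k :&: D) v)) e2 -h2 e1.
rewrite ![Lk k :&: _]setIC.
have [c0|c0] := eqVneq (C :&: Lk k) set0; have [d0|d0] := eqVneq (D :&: Lk k) set0.
- by rewrite c0 d0.
- by have := mixed_lt hD fC fD c0 d0; rewrite hcard ltnn.
- by have := mixed_lt hC fD fC d0 c0; rewrite hcard ltnn.
have GC := Gt_sub hC c0; have GD := Gt_sub hD d0.
rewrite !free_CLk //; split.
  by rewrite !cardsD (setIidPr GC) (setIidPr GD) hcard.
move=> v; have e1 := cnt_split C (Gt k) v; have e2 := cnt_split D (Gt k) v.
rewrite (setIidPr GC) in e1; rewrite (setIidPr GD) in e2.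
by apply/eqP; rewrite -(eqn_add2l (cnt (Gt k) v)) e1 e2 hcnt.
Qed.

Lemma if_dir (C D : {set T}) : dual_ideal le C -> dual_ideal le D -> #|C| = #|D| ->
  (forall v, cnt C v = cnt D v) ->
  pi_poly le tau eta setT C = pi_poly le tau eta setT D.
Proof.
move=> hC hD hcard hcnt; rewrite !pi_formula; congr (_ + _); apply: eq_bigr => k _.
rewrite /term -/(free C k) -/(free D k).
have fe : free C k = free D k.
  by apply/idP/idP; apply: free_card.
rewrite fe; case fD: (free D k) => //.
by rewrite (level_if hC hD hcard hcnt) // fe.
Qed.

End S.

Theorem proposition3p4 (T : finType) (le : rel T) (K : fieldType)
    (tau eta : T -> K)
    (hP : partial_order le) (hH : hierarchical le)
    (htau : forall i, tau i != 0) (heta : forall i, eta i != -1)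
    (D C : {set T}) (hD : dual_ideal le D) (hC : dual_ideal le C) :
  pi_poly le tau eta [set: T] C = pi_poly le tau eta [set: T] D <->
  exists e : {x : T | x \in C} -> {x : T | x \in D},
    bijective e /\ forall i, eta (sval i) = eta (sval (e i)).
Proof.
split.
  move=> hpi; apply: bij_of_counts => v.
  rewrite !(cnt_levels le); apply: eq_bigr => k _.
  apply: (level_counts hP hH htau heta hC hD) => //.
  by move=> k' k'n; exact: (terms_eq hP hH hpi).
case=> e [be he].
have hcnt := counts_of_bij be he.
apply: (if_dir hP hH tau heta hC hD).
  have eA (A : {set T}) : [set i in A | true] = A.
    by apply/setP => i; rewrite inE andbT.
  by have := hcnt (fun _ => true); rewrite /= !eA.
by move=> v; exact: (hcnt (fun x => x == v)).
Qed.
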